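(* Let $i,j\in[s]$. If $\varphi$ is a homomorphism from $F_i^{\bullet\bullet}$ to $F_j^{\bullet\bullet}$ (both viewed as ordinary digraphs), then $\varphi(z_i),\varphi(w_i)\in\{z_j,w_j\}$.
   Context: All digraphs are finite and loopless; a tournament is a digraph in which every pair of distinct vertices is joined by exactly one arc. A homomorphism from a digraph $F$ to a digraph $H$ is a map $\varphi:V(F)\to V(H)$ with $(\varphi(u),\varphi(v))\in E(H)$ whenever $(u,v)\in E(F)$. Construction of $F_i^{\bullet\bullet}$: fix $s\in\mathbb{N}^+$, a positive integer $m$, and a tournament $F_0$ on vertex set $[m]$ satisfying: (I) every vertex has out-degree and in-degree at most $2m/3$; (II) there are no disjoint $A_1,A_2\subseteq[m]$ with $|A_1|=|A_2|=\lceil\sqrt m\,\rceil$ such that $(a_1,a_2)$ is an arc for all $a_1\in A_1,a_2\in A_2$; (III) for every $S\subseteq[m]$ with $|S|\ge 2m/13-\sqrt m$, $F_0[S]$ contains a directed cycle. Let $k_1,\dots,k_s$ be integers in the open interval $(2m/3+2,\,5m/6)$ with $k_i>k_{i+1}+1$ for $1\le i<s$. For $i\in[s]$, $F_i^{\bullet\bullet}$ is the digraph on vertex set $[m]\cup\{z_i,w_i\}$ ($z_i,w_i$ two new vertices, called roots) whose arcs are all arcs of $F_0$, together with the arcs $z_i\to v$ and $v\to w_i$ for every $1\le v\le k_i$, and the arcs $u\to z_i$ and $w_i\to u$ for every $k_i<u\le m$. There is no arc between $z_i$ and $w_i$. *)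

(* Defs.v *)
From HB Require Import structures.
From mathcomp Require Import all_boot all_order all_algebra.
From mathcomp Require Import reals.
Set Implicit Arguments. Unset Strict Implicit. Unset Printing Implicit Defensive.
Import Order.TTheory GRing.Theory Num.Theory.

Definition is_hom (V V' : finType) (E : rel V) (E' : rel V') (f : V -> V') : Prop :=
  forall u v, E u v -> E' (f u) (f v).

Definition is_tournament (m : nat) (F0 : rel 'I_m) : Prop :=
  (forall u, ~~ F0 u u) /\ (forall u v, u != v -> F0 u v != F0 v u).

Definition outdeg (m : nat) (F0 : rel 'I_m) (u : 'I_m) : nat := #|[set v | F0 u v]|.
Definition indeg (m : nat) (F0 : rel 'I_m) (u : 'I_m) : nat := #|[set v | F0 v u]|.

Definition has_dicycle (m : nat) (F0 : rel 'I_m) (S : {set 'I_m}) : Prop :=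
  exists c : seq 'I_m, [/\ 2 <= size c, uniq c, all (fun x => x \in S) c & cycle F0 c].

(* Vertex set of F_i^{bullet bullet}: the vertex labelled a+1 (a : 'I_m) is
   inl a, the root z_i is inr true and the root w_i is inr false. *)
Definition Vbb (m : nat) : finType := ('I_m + bool)%type.
Definition zr (m : nat) : Vbb m := inr true.
Definition wr (m : nat) : Vbb m := inr false.

Definition Fbb (m : nat) (F0 : rel 'I_m) (k : nat) : rel (Vbb m) :=
  fun x y =>
    match x, y with
    | inl a, inl b => F0 a b
    | inr true, inl b => b.+1 <= k        (* z -> v, 1 <= v <= k *)
    | inl a, inr false => a.+1 <= k       (* v -> w, 1 <= v <= k *)
    | inl a, inr true => k < a.+1         (* u -> z, k < u <= m *)
    | inr false, inl b => k < b.+1        (* w -> u, k < u <= m *)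
    | _, _ => false
    end.

(* Main.v *)
Require Import Defs.
From HB Require Import structures.
From mathcomp Require Import all_boot all_order all_algebra.
From mathcomp Require Import reals.
From mathcomp Require Import lra.
Import Order.TTheory GRing.Theory Num.Theory.
Local Open Scope ring_scope.

Lemma Fbb_irr (m : nat) (F0 : rel 'I_m) K (ht : is_tournament F0) x :
  ~~ Fbb F0 K x x.
Proof. case: x => [a|[]] //=; exact: ht.1. Qed.

Lemma hom_inj (m : nat) (F0 : rel 'I_m) K K' (ht : is_tournament F0)
  (phi : Vbb m -> Vbb m) (hphi : is_hom (Fbb F0 K) (Fbb F0 K') phi) (a b : 'I_m) :
  phi (inl a) = phi (inl b) -> a = b.
Proof.
move=> E; apply/eqP; apply/negPn/negP => nab.
have := ht.2 a b nab.
case Hab: (F0 a b); case Hba: (F0 b a) => // _.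
- have := hphi (inl a) (inl b) Hab; rewrite E => H.
  by move: (@Fbb_irr m F0 K' ht (phi (inl b))); rewrite H.
- have := hphi (inl b) (inl a) Hba; rewrite E => H.
  by move: (@Fbb_irr m F0 K' ht (phi (inl b))); rewrite H.
Qed.

Lemma count_img (T : finType) K (g : 'I_K -> T) (B : {set T}) :
  injective g -> (forall x, g x \in B) -> (K <= #|B|)%N.
Proof.
move=> gi gB.
have <- : #|[set g x | x in 'I_K]| = K by rewrite card_imset // card_ord.
apply: subset_leq_card; apply/subsetP => y /imsetP [x _ ->]; exact: gB.
Qed.

Lemma nbhd_card (m : nat) (F0 : rel 'I_m) (S : {set 'I_m}) (B : {set Vbb m}) :
  (forall b, inl b \in B -> b \in S) -> (#|B| <= #|S| + 2)%N.
Proof.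
move=> HB.
have sub : B \subset (inl @: S) :|: [set zr m; wr m].
  apply/subsetP => y; case: y => [b|[]] Hy; rewrite !inE.
  - by apply/orP; left; apply/imsetP; exists b => //; exact: HB.
  - by rewrite eqxx orbT.
  - by rewrite eqxx !orbT.
apply: (leq_trans (subset_leq_card sub)).
rewrite (leq_trans (leq_card_setU _ _)) // card_imset; last by move=> ? ? [].
by rewrite leq_add2l cards2; case: (_ != _).
Qed.

Theorem claim4p4 (R : realType) (s m : nat) (F0 : rel 'I_m) (k : nat -> nat)
  (hs : (0 < s)%N) (hm : (0 < m)%N)
  (htour : is_tournament F0)
  (hI : forall u : 'I_m,
      (outdeg F0 u)%:R <= 2 * m%:R / 3 :> R /\ (indeg F0 u)%:R <= 2 * m%:R / 3 :> R)
  (hII : forall A1 A2 : {set 'I_m}, [disjoint A1 & A2] ->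
      (#|A1|%:Z = Num.ceil (Num.sqrt (m%:R : R))) ->
      (#|A2|%:Z = Num.ceil (Num.sqrt (m%:R : R))) ->
      ~ (forall a1 a2, a1 \in A1 -> a2 \in A2 -> F0 a1 a2))
  (hIII : forall S : {set 'I_m},
      2 * m%:R / 13 - Num.sqrt (m%:R : R) <= #|S|%:R -> has_dicycle F0 S)
  (hk : forall i : nat, (1 <= i <= s)%N ->
      2 * m%:R / 3 + 2 < (k i)%:R :> R /\ (k i)%:R < 5 * m%:R / 6 :> R)
  (hkdec : forall i : nat, (1 <= i < s)%N -> (k i.+1 + 1 < k i)%N)
  (i j : nat) (hi : (1 <= i <= s)%N) (hj : (1 <= j <= s)%N)
  (phi : Vbb m -> Vbb m)
  (hphi : is_hom (Fbb F0 (k i)) (Fbb F0 (k j)) phi) :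
  phi (zr m) \in [:: zr m; wr m] /\ phi (wr m) \in [:: zr m; wr m].
Proof.
have [hk1 hk2] := hk i hi.
have HK : (k i <= m)%N.
  have : (k i)%:R < m%:R :> R.
    have : 0 <= m%:R :> R by rewrite ler0n.
    lra.
  by rewrite ltr_nat => /ltnW.
pose g (a : 'I_(k i)) : Vbb m := phi (inl (widen_ord HK a)).
have ginj : injective g.
  move=> a b /(@hom_inj m F0 _ _ htour phi hphi) E; apply/val_inj.
  by have := congr1 val E.
have bigK : forall v : 'I_m, (outdeg F0 v + 2 < k i)%N /\ (indeg F0 v + 2 < k i)%N.
  move=> v; have [h1 h2] := hI v; split; rewrite -(ltr_nat R) natrD; lra.
split.
- case E: (phi (zr m)) => [v|[]]; rewrite ?inE ?eqxx ?orbT //.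
  exfalso.
  have := @count_img _ _ g [set y | Fbb F0 (k j) (inl v) y] ginj.
  have := @nbhd_card m F0 [set b | F0 v b] [set y | Fbb F0 (k j) (inl v) y].
  rewrite /= => H1 H2.
  have H3 : (k i <= #|[set b | F0 v b]| + 2)%N.
    apply: leq_trans (H1 _); last by move=> b; rewrite !inE.
    apply: H2 => x; rewrite inE /g.
    have := hphi (zr m) (inl (widen_ord HK x)); rewrite E; apply => /=.
    exact: ltn_ord x.
  have := (bigK v).1; rewrite /outdeg => h; by move: (leq_ltn_trans H3 h); rewrite ltnn.
- case E: (phi (wr m)) => [v|[]]; rewrite ?inE ?eqxx ?orbT //.
  exfalso.
  have := @count_img _ _ g [set y | Fbb F0 (k j) y (inl v)] ginj.
  have := @nbhd_card m F0 [set b | F0 b v] [set y | Fbb F0 (k j) y (inl v)].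
  rewrite /= => H1 H2.
  have H3 : (k i <= #|[set b | F0 b v]| + 2)%N.
    apply: leq_trans (H1 _); last by move=> b; rewrite !inE.
    apply: H2 => x; rewrite inE /g.
    have := hphi (inl (widen_ord HK x)) (wr m); rewrite E; apply => /=.
    exact: ltn_ord x.
  have := (bigK v).2; rewrite /indeg => h; by move: (leq_ltn_trans H3 h); rewrite ltnn.
Qed.
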